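(* Let $\alpha\neq0$ and consider the control system on $G$ $\dot x=u\alpha x,\quad \dot y=x-1,\quad u\in\mathcal U.$ If $(x_1,y_1),(x_2,y_2)\in G$ satisfy $x_1<1<x_2$, then $(x_2,y_2)\in\mathcal O^+(x_1,y_1)$ and $(x_1,y_1)\in\mathcal O^+(x_2,y_2)$.
   Context: Let $G=\{(x,y)\in\mathbb{R}^2:x>0\}$. Fix $\Omega=[u_*,u^*]$ with $u_*<0<u^*$. The admissible controls $\mathcal U$ are the piecewise constant functions $\mathbb{R}\to\Omega$. We write $\varphi(t,p,u)$ for the solution starting at $p$, and $\mathcal O^+(p)=\{\varphi(t,p,u):t\ge0,u\in\mathcal U\}$. *)

(* Defs.v *)
From Stdlib Require Import Reals.
Open Scope R_scope.

Definition inG (p : R * R) : Prop := 0 < fst p.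

Definition is_partition (T : R) (n : nat) (t : nat -> R) : Prop :=
  t O = 0 /\ t n = T /\ (forall i, (i < n)%nat -> t i < t (S i)).

Definition const_on_pieces (u : R -> R) (n : nat) (t : nat -> R) : Prop :=
  forall i, (i < n)%nat -> forall s, t i <= s < t (S i) -> u s = u (t i).

Definition admissible (u_lo u_hi : R) (u : R -> R) : Prop :=
  (forall s, u_lo <= u s <= u_hi) /\
  (forall a b, a < b -> exists n (t : nat -> R),
      t O = a /\ t n = b /\ (forall i, (i < n)%nat -> t i < t (S i)) /\
      const_on_pieces u n t).

(* (x,y) is the (Caratheodory) solution on [0,T] of
     x' = u alpha x,  y' = x - 1
   with control u, i.e. (x,y) is continuous on [0,T] and satisfies the ODE on
   the interior of each piece of a partition of [0,T] on which u is constant. *)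
Definition is_solution (alpha : R) (u : R -> R) (T : R) (x y : R -> R) : Prop :=
  exists n (t : nat -> R),
    is_partition T n t /\ const_on_pieces u n t /\
    (forall s, 0 <= s <= T -> continuity_pt x s /\ continuity_pt y s) /\
    (forall i, (i < n)%nat -> forall s, t i < s < t (S i) ->
        derivable_pt_lim x s (u s * alpha * x s) /\
        derivable_pt_lim y s (x s - 1)).

Definition in_pos_orbit (alpha u_lo u_hi : R) (p q : R * R) : Prop :=
  exists (T : R) (u x y : R -> R),
    0 <= T /\ admissible u_lo u_hi u /\ is_solution alpha u T x y /\
    x 0 = fst p /\ y 0 = snd p /\
    (forall s, 0 <= s <= T -> inG (x s, y s)) /\
    x T = fst q /\ y T = snd q.

(* Main.v *)
Require Import Defs.
From Stdlib Require Import Reals Lra Lia.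
From Coquelicot Require Import Coquelicot.
Open Scope R_scope.

Definition PC (u : R -> R) : Prop :=
  forall a b, a < b -> exists n (t : nat -> R),
      t O = a /\ t n = b /\ (forall i, (i < n)%nat -> t i < t (S i)) /\
      const_on_pieces u n t.

Lemma part_mono (n : nat) (t : nat -> R) :
  (forall i, (i < n)%nat -> t i < t (S i)) ->
  forall i j, (i <= j <= n)%nat -> t i <= t j.
Proof.
  intros H i j. induction j as [|j IH]; intros Hij.
  - assert (i = 0%nat) by lia. subst. lra.
  - destruct (Nat.eq_dec i (S j)) as [->|Hne]. lra.
    assert (t i <= t j) by (apply IH; lia).
    assert (t j < t (S j)) by (apply H; lia). lra.
Qed.

Lemma PC_const (c : R) : PC (fun _ => c).
Proof.
  intros a b Hab. exists 1%nat, (fun i => match i with O => a | _ => b end).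
  repeat split; auto.
  - intros i Hi. assert (i = 0%nat) by lia. subst. exact Hab.
Qed.

Lemma PC_if (p : R) (u1 u2 : R -> R) :
  PC u1 -> PC u2 -> PC (fun s => if Rlt_dec s p then u1 s else u2 s).
Proof.
  intros H1 H2 a b Hab.
  destruct (Rle_dec b p) as [Hbp|Hbp].
  { destruct (H1 a b Hab) as (n & t & H0 & Hn & Hi & Hc).
    exists n, t. repeat split; auto.
    intros i Hin s Hs.
    assert (t (S i) <= t n) by (apply (part_mono n t Hi); lia).
    destruct (Rlt_dec s p); [|lra].
    destruct (Rlt_dec (t i) p); [|assert (t i < t (S i)) by (apply Hi; lia); lra].
    apply Hc; auto. }
  destruct (Rle_dec p a) as [Hpa|Hpa].
  { destruct (H2 a b Hab) as (n & t & H0 & Hn & Hi & Hc).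
    exists n, t. repeat split; auto.
    intros i Hin s Hs.
    assert (t 0%nat <= t i) by (apply (part_mono n t Hi); lia).
    destruct (Rlt_dec s p); [lra|].
    destruct (Rlt_dec (t i) p); [lra|].
    apply Hc; auto. }
  destruct (H1 a p ltac:(lra)) as (n1 & t1 & H10 & H1n & H1i & H1c).
  destruct (H2 p b ltac:(lra)) as (n2 & t2 & H20 & H2n & H2i & H2c).
  assert (Hn2 : n2 <> 0%nat) by (intro; subst; lra).
  set (t := fun i => if (i <=? n1)%nat then t1 i else t2 (i - n1)%nat).
  assert (TA : forall i, (i <= n1)%nat -> t i = t1 i).
  { intros i Hi. unfold t. apply Nat.leb_le in Hi. now rewrite Hi. }
  assert (TB : forall i, (n1 <= i)%nat -> t i = t2 (i - n1)%nat).
  { intros i Hi. unfold t. destruct (Nat.leb_spec i n1).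
    - assert (i = n1) by lia. subst. rewrite Nat.sub_diag. lra.
    - reflexivity. }
  exists (n1 + n2)%nat, t. repeat split.
  - rewrite TA by lia. auto.
  - rewrite TB by lia. replace (n1 + n2 - n1)%nat with n2 by lia. auto.
  - intros i Hi. destruct (Nat.lt_ge_cases i n1).
    + rewrite !TA by lia. apply H1i; lia.
    + rewrite !TB by lia. replace (S i - n1)%nat with (S (i - n1)) by lia.
      apply H2i; lia.
  - intros i Hi s Hs. destruct (Nat.lt_ge_cases i n1).
    + rewrite !TA in Hs by lia. rewrite TA by lia.
      assert (t1 (S i) <= t1 n1) by (apply (part_mono n1 t1 H1i); lia).
      assert (t1 i < t1 (S i)) by (apply H1i; lia).
      destruct (Rlt_dec s p); [|lra].
      destruct (Rlt_dec (t1 i) p); [|lra].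
      apply H1c; auto.
    + rewrite !TB in Hs by lia. rewrite TB by lia.
      replace (S i - n1)%nat with (S (i - n1)) in Hs by lia.
      assert (t2 0%nat <= t2 (i - n1)%nat) by (apply (part_mono n2 t2 H2i); lia).
      destruct (Rlt_dec s p); [lra|].
      destruct (Rlt_dec (t2 (i - n1)%nat) p); [lra|].
      apply H2c; [lia|]. auto.
Qed.
Definition pos (z : R) : R := (z + Rabs z) / 2.
Lemma pos_le0 z : z <= 0 -> pos z = 0.
Proof. intros; unfold pos; rewrite Rabs_left1 by lra; lra. Qed.
Lemma pos_ge0 z : 0 <= z -> pos z = z.
Proof. intros; unfold pos; rewrite Rabs_pos_eq by lra; lra. Qed.

Lemma cp_plus f g x : continuity_pt f x -> continuity_pt g x -> continuity_pt (fun s => f s + g s) x.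
Proof. intros; now apply continuity_pt_plus. Qed.
Lemma cp_minus f g x : continuity_pt f x -> continuity_pt g x -> continuity_pt (fun s => f s - g s) x.
Proof. intros; now apply continuity_pt_minus. Qed.
Lemma cp_mult f g x : continuity_pt f x -> continuity_pt g x -> continuity_pt (fun s => f s * g s) x.
Proof. intros; now apply continuity_pt_mult. Qed.
Lemma cp_const c x : continuity_pt (fun _ => c) x.
Proof. apply continuity_pt_const. intros ??; reflexivity. Qed.
Lemma cp_id x : continuity_pt (fun s => s) x.
Proof. apply continuity_pt_id. Qed.
Lemma cp_div f c x : continuity_pt f x -> continuity_pt (fun s => f s / c) x.
Proof. intros; unfold Rdiv; apply cp_mult; auto; apply cp_const. Qed.
Lemma cp_exp f x : continuity_pt f x -> continuity_pt (fun s => exp (f s)) x.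
Proof. intros H. apply (continuity_pt_comp f exp x H).
  apply derivable_continuous_pt. exists (exp (f x)). apply derivable_pt_lim_exp. Qed.
Lemma cp_pos f x : continuity_pt f x -> continuity_pt (fun s => pos (f s)) x.
Proof. intros H. unfold pos. apply cp_div. apply cp_plus; auto.
  apply (continuity_pt_comp f Rabs x H). apply Rcontinuity_abs. Qed.

Ltac cont := repeat first [ simple apply cp_const | simple apply cp_id | simple apply cp_pos | simple apply cp_exp | simple apply cp_div | simple apply cp_minus
  | simple apply cp_plus | simple apply cp_mult ].

Lemma reach (u_lo u_hi alpha c xa ya xb yb TB t1 t3 : R) :
  u_lo <= c <= u_hi -> u_lo <= 0 <= u_hi -> c * alpha <> 0 -> 0 < xa -> 0 < TB ->
  xb = xa * exp (c * alpha * TB) -> 0 < t1 -> 0 < t3 ->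
  yb = ya + (xa - 1) * t1 + xa * (exp (c * alpha * TB) - 1) / (c * alpha) - TB + (xb - 1) * t3 ->
  in_pos_orbit alpha u_lo u_hi (xa, ya) (xb, yb).
Proof.
  intros Hc H0 Hk Hxa HTB Hxb Ht1 Ht3 Hyb.
  set (k := c * alpha) in *.
  set (T := t1 + TB + t3).
  set (u := fun s => if Rlt_dec s t1 then 0 else (if Rlt_dec s (t1 + TB) then c else 0)).
  set (r := fun s => pos (s - t1) - pos (s - (t1 + TB))).
  set (x := fun s => xa * exp (k * (pos (s - t1) - pos (s - (t1 + TB))))).
  set (y := fun s => ya + (xa - 1) * (s - pos (s - t1))
     + xa * (exp (k * (pos (s - t1) - pos (s - (t1 + TB)))) - 1) / k
     - (pos (s - t1) - pos (s - (t1 + TB))) + (xb - 1) * pos (s - (t1 + TB))).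
  exists T, u, x, y.
  assert (Hx0 : forall s, 0 < x s) by (intro s; unfold x; apply Rmult_lt_0_compat; auto; apply exp_pos).
  split; [unfold T; lra|]. split.
  { split.
    - intro s. unfold u. destruct (Rlt_dec s t1); [lra|]. destruct (Rlt_dec s (t1+TB)); lra.
    - apply PC_if. apply PC_const. apply PC_if; apply PC_const. }
  split.
  { exists 3%nat, (fun i => match i with O => 0 | 1 => t1 | 2 => t1 + TB | _ => T end).
    split; [|split; [|split]].
    - split; [reflexivity|split; [reflexivity|]].
      intros i Hi. destruct i as [|[|[|i]]]; try lia; unfold T; lra.
    - intros i Hi s Hs. unfold u.
      destruct i as [|[|[|i]]]; try lia; unfold T in Hs;
      repeat destruct Rlt_dec; lra.
    - intros s _. split; unfold x, y; cont.
    - intros i Hi s Hs. destruct i as [|[|[|i]]]; try lia.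
      +
        assert (Hu : u s = 0) by (unfold u; destruct Rlt_dec; lra).
        rewrite Hu.
        assert (Hloc : locally s (fun z => z < t1)).
        { apply (locally_interval _ s m_infty t1); simpl; auto; lra. }
        split; apply is_derive_Reals.
        * apply (is_derive_ext_loc (fun _ => xa)).
          { eapply filter_imp; [|exact Hloc]; intros z Hz; simpl in Hz; match goal with |- ?a = ?b => change (@eq R a b) end. unfold x.
            rewrite !pos_le0 by lra. replace (k * (0 - 0)) with 0 by ring. rewrite exp_0. ring. }
          auto_derive; auto; ring.
        * apply (is_derive_ext_loc (fun z => ya + (xa - 1) * z)).
          { eapply filter_imp; [|exact Hloc]; intros z Hz; simpl in Hz; match goal with |- ?a = ?b => change (@eq R a b) end. unfold y.
            rewrite !pos_le0 by lra. replace (k * (0 - 0)) with 0 by ring. rewrite exp_0. field. auto. }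
          assert (Hxs : x s = xa).
          { unfold x. rewrite !pos_le0 by lra. replace (k * (0 - 0)) with 0 by ring. rewrite exp_0. ring. }
          rewrite Hxs. auto_derive; auto. ring.
      +
        assert (Hu : u s = c) by (unfold u; simpl in Hs; repeat destruct Rlt_dec; lra).
        rewrite Hu. simpl in Hs.
        assert (Hloc : locally s (fun z => t1 < z < t1 + TB)).
        { apply (locally_interval _ s t1 (t1 + TB)); simpl; try lra. auto. }
        assert (Hxs : x s = xa * exp (k * (s - t1))).
        { unfold x. rewrite (pos_le0 (s - (t1 + TB))) by lra. rewrite (pos_ge0 (s - t1)) by lra. f_equal. f_equal. ring. }
        split; apply is_derive_Reals.
        * apply (is_derive_ext_loc (fun z => xa * exp (k * (z - t1)))).
          { eapply filter_imp; [|exact Hloc]; intros z Hz; simpl in Hz; match goal with |- ?a = ?b => change (@eq R a b) end. unfold x.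
            rewrite (pos_le0 (z - (t1 + TB))) by lra. rewrite (pos_ge0 (z - t1)) by lra. f_equal. f_equal. ring. }
          rewrite Hxs. auto_derive; auto. unfold k, Rminus. ring.
        * apply (is_derive_ext_loc (fun z => ya + (xa - 1) * t1 + xa * (exp (k * (z - t1)) - 1) / k - (z - t1))).
          { eapply filter_imp; [|exact Hloc]; intros z Hz; simpl in Hz; match goal with |- ?a = ?b => change (@eq R a b) end. unfold y.
            rewrite (pos_le0 (z - (t1 + TB))) by lra. rewrite (pos_ge0 (z - t1)) by lra. replace (z - t1 - 0) with (z - t1) by ring. ring. }
          rewrite Hxs. auto_derive; auto. unfold Rminus. field. auto.
      +
        assert (Hu : u s = 0) by (unfold u; simpl in Hs; repeat destruct Rlt_dec; lra).
        rewrite Hu. simpl in Hs. unfold T in Hs.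
        assert (Hloc : locally s (fun z => t1 + TB < z)).
        { apply (locally_interval _ s (t1 + TB) p_infty); simpl; auto; lra. }
        split; apply is_derive_Reals.
        * apply (is_derive_ext_loc (fun _ => xb)).
          { eapply filter_imp; [|exact Hloc]; intros z Hz; simpl in Hz; match goal with |- ?a = ?b => change (@eq R a b) end. unfold x.
            rewrite !pos_ge0 by lra. rewrite Hxb. f_equal. f_equal. ring. }
          auto_derive; auto; ring.
        * apply (is_derive_ext_loc (fun z => ya + (xa - 1) * t1 + xa * (exp (k * TB) - 1) / k - TB + (xb - 1) * (z - (t1 + TB)))).
          { eapply filter_imp; [|exact Hloc]; intros z Hz; simpl in Hz; match goal with |- ?a = ?b => change (@eq R a b) end. unfold y.
            rewrite !pos_ge0 by lra. replace (z - t1 - (z - (t1 + TB))) with TB by ring. ring. }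
          assert (Hxs : x s = xb).
          { unfold x. rewrite !pos_ge0 by lra. rewrite Hxb. f_equal. f_equal. ring. }
          rewrite Hxs. auto_derive; auto. ring. }
  split; [|split; [|split; [|split]]].
  - unfold x; simpl. rewrite !pos_le0 by lra. replace (k * (0 - 0)) with 0 by ring. rewrite exp_0. ring.
  - unfold y; simpl. rewrite !pos_le0 by lra. replace (k * (0 - 0)) with 0 by ring. rewrite exp_0. field. auto.
  - intros s _. unfold inG. simpl. apply Hx0.
  - unfold x, T; simpl. rewrite !pos_ge0 by lra. rewrite Hxb. f_equal. f_equal. ring.
  - unfold y, T; simpl. rewrite !pos_ge0 by lra. rewrite Hyb.
    replace (t1 + TB + t3 - t1 - (t1 + TB + t3 - (t1 + TB))) with TB by ring. ring.
Qed.

Lemma reach2 (u_lo u_hi alpha xa ya xb yb : R) :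
  u_lo < 0 < u_hi -> alpha <> 0 -> 0 < xa -> 0 < xb -> (xa - 1) * (xb - 1) < 0 ->
  in_pos_orbit alpha u_lo u_hi (xa, ya) (xb, yb).
Proof.
  intros Hu Ha Hxa Hxb Hs.
  assert (Hne : xa <> xb) by (intro E0; rewrite E0 in Hs; pose proof (Rle_0_sqr (xb - 1)); unfold Rsqr in *; lra).
  set (c := if Rlt_dec 0 ((xb - xa) * alpha) then u_hi else u_lo).
  assert (Hc : u_lo <= c <= u_hi) by (unfold c; destruct Rlt_dec; lra).
  assert (Hkp : 0 < c * alpha * (xb - xa)).
  { unfold c; destruct Rlt_dec as [H|H].
    - replace (u_hi * alpha * (xb - xa)) with (u_hi * ((xb - xa) * alpha)) by ring.
      apply Rmult_lt_0_compat; lra.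
    - assert ((xb - xa) * alpha <> 0) by (apply Rmult_integral_contrapositive; split; lra).
      replace (u_lo * alpha * (xb - xa)) with ((- u_lo) * (- ((xb - xa) * alpha))) by ring.
      apply Rmult_lt_0_compat; lra. }
  set (k := c * alpha) in *.
  assert (Hk : k <> 0) by (intro H; rewrite H in Hkp; lra).
  assert (Hc0 : c <> 0) by (intro Z; apply Hk; unfold k; rewrite Z; ring).
  set (L := ln (xb / xa)).
  assert (HL : exp L = xb / xa) by (apply exp_ln; apply Rdiv_lt_0_compat; lra).
  assert (HLk : 0 < L * k).
  { destruct (Rlt_dec xa xb).
    - assert (0 < L).
      { unfold L. rewrite <- ln_1. apply ln_increasing; [lra|].
        apply (Rmult_lt_reg_r xa); [lra|]. field_simplify; lra. }
      assert (0 < k) by nra. nra.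
    - assert (L < 0).
      { unfold L. rewrite <- ln_1. apply ln_increasing; [apply Rdiv_lt_0_compat; lra|].
        apply (Rmult_lt_reg_r xa); [lra|]. field_simplify; lra. }
      assert (k < 0) by nra. nra. }
  set (TB := L / k).
  assert (HTB : 0 < TB).
  { unfold TB. replace (L / k) with ((L * k) / (k * k)) by (field; auto).
    apply Rdiv_lt_0_compat; auto. nra. }
  assert (HkTB : k * TB = L) by (unfold TB; field; auto).
  assert (Hxb' : xb = xa * exp (k * TB)) by (rewrite HkTB, HL; field; lra).
  set (E := yb - ya - (xa * (exp (k * TB) - 1) / k - TB)).
  destruct (Rlt_dec xa 1) as [H1|H1].
  - assert (1 < xb) by nra.
    set (t1 := (Rabs E + 1) / (1 - xa)).
    set (t3 := (E + Rabs E + 1) / (xb - 1)).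
    assert (0 <= Rabs E) by apply Rabs_pos.
    assert (E + Rabs E >= 0) by (pose proof (Rle_abs (- E)); rewrite Rabs_Ropp in *; lra).
    apply (reach u_lo u_hi alpha c xa ya xb yb TB t1 t3); auto; try lra.
    + unfold t1; apply Rdiv_lt_0_compat; lra.
    + unfold t3; apply Rdiv_lt_0_compat; lra.
    + unfold t1, t3, E, k in *; field; repeat split; try lra; auto.
  - assert (1 < xa) by (destruct (Rtotal_order xa 1) as [h|[h|h]]; [contradiction|assert ((xa-1)*(xb-1) = 0) by (rewrite h; ring); lra|lra]).
    assert (xb < 1) by nra.
    set (t1 := (Rabs E + 1) / (xa - 1)).
    set (t3 := (Rabs E + 1 - E) / (1 - xb)).
    assert (0 <= Rabs E) by apply Rabs_pos.
    assert (E <= Rabs E) by apply Rle_abs.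
    apply (reach u_lo u_hi alpha c xa ya xb yb TB t1 t3); auto; try lra.
    + unfold t1; apply Rdiv_lt_0_compat; lra.
    + unfold t3; apply Rdiv_lt_0_compat; lra.
    + unfold t1, t3, E, k in *; field; repeat split; try lra; auto.
Qed.

Theorem mainTheorem6 (u_lo u_hi alpha x1 y1 x2 y2 : R) :
  u_lo < 0 < u_hi -> alpha <> 0 ->
  inG (x1, y1) -> inG (x2, y2) ->
  x1 < 1 < x2 ->
  in_pos_orbit alpha u_lo u_hi (x1, y1) (x2, y2) /\
  in_pos_orbit alpha u_lo u_hi (x2, y2) (x1, y1).
Proof.
  intros Hu Ha H1 H2 Hx. unfold inG in H1, H2; simpl in H1, H2.
  split; apply reach2; auto; nra.
Qed.
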